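(* Let $\Gamma$ be a group and $\phi:\Gamma\to\mathbb R$ a homogeneous quasimorphism which is not a homomorphism. Let $\mu=\exp(2\pi i\phi):\Gamma\to S^1=U(1)$. Then $\frac{3}{\pi}\arcsin\frac{D(\mu)}{2}+\|d\phi\|_\infty\ge1$.
   Context: A quasimorphism is a function $\phi:\Gamma\to\mathbb R$ with $d\phi(\gamma,\eta)=\phi(\gamma\eta)-\phi(\gamma)-\phi(\eta)$ bounded on $\Gamma\times\Gamma$; $\|d\phi\|_\infty=\sup|d\phi|$. It is homogeneous if $\phi(\gamma^n)=n\phi(\gamma)$ for all $\gamma\in\Gamma$, $n\in\mathbb Z$. For a map $\mu:\Gamma\to U(1)$, $D(\mu)=\inf\{\sup_\gamma|\mu(\gamma)-\nu(\gamma)|:\nu\in\mathrm{Hom}(\Gamma,U(1))\}$. *)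

(* Defs.v *)
From Stdlib Require Import Reals ZArith.
Open Scope R_scope.

Definition is_group {G : Type} (mul : G -> G -> G) (inv : G -> G) (e : G) : Prop :=
  (forall a b c, mul (mul a b) c = mul a (mul b c)) /\
  (forall a, mul e a = a) /\ (forall a, mul a e = a) /\
  (forall a, mul (inv a) a = e) /\ (forall a, mul a (inv a) = e).

Fixpoint npow {G : Type} (mul : G -> G -> G) (e : G) (n : nat) (g : G) : G :=
  match n with O => e | S k => mul g (npow mul e k g) end.

Definition zpow {G : Type} (mul : G -> G -> G) (inv : G -> G) (e : G) (n : Z) (g : G) : G :=
  match n with
  | Z0 => e
  | Zpos p => npow mul e (Pos.to_nat p) g
  | Zneg p => inv (npow mul e (Pos.to_nat p) g)
  end.

Definition dphi {G : Type} (mul : G -> G -> G) (phi : G -> R) (g h : G) : R :=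
  phi (mul g h) - phi g - phi h.

Definition is_quasimorphism {G : Type} (mul : G -> G -> G) (phi : G -> R) : Prop :=
  exists C, forall g h, Rabs (dphi mul phi g h) <= C.

Definition is_homogeneous {G : Type} (mul : G -> G -> G) (inv : G -> G) (e : G)
  (phi : G -> R) : Prop :=
  forall g (n : Z), phi (zpow mul inv e n g) = IZR n * phi g.

Definition is_hom_R {G : Type} (mul : G -> G -> G) (phi : G -> R) : Prop :=
  forall g h, phi (mul g h) = phi g + phi h.

Definition Cx := (R * R)%type.
Definition Cmul (z w : Cx) : Cx :=
  (fst z * fst w - snd z * snd w, fst z * snd w + snd z * fst w).
Definition Cdist (z w : Cx) : R :=
  sqrt ((fst z - fst w)^2 + (snd z - snd w)^2).
Definition in_U1 (z : Cx) : Prop := (fst z)^2 + (snd z)^2 = 1.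
Definition expi (t : R) : Cx := (cos t, sin t).

Definition is_hom_U1 {G : Type} (mul : G -> G -> G) (nu : G -> Cx) : Prop :=
  (forall g, in_U1 (nu g)) /\ (forall g h, nu (mul g h) = Cmul (nu g) (nu h)).

Definition is_glb (E : R -> Prop) (m : R) : Prop :=
  (forall x, E x -> m <= x) /\ (forall b, (forall x, E x -> b <= x) -> b <= m).

Definition sup_dist {G : Type} (mu nu : G -> Cx) (s : R) : Prop :=
  is_lub (fun x => exists g, x = Cdist (mu g) (nu g)) s.

Definition is_D {G : Type} (mul : G -> G -> G) (mu : G -> Cx) (D : R) : Prop :=
  is_glb (fun s => exists nu, is_hom_U1 mul nu /\ sup_dist mu nu s) D.

Definition is_defect_norm {G : Type} (mul : G -> G -> G) (phi : G -> R) (c : R) : Prop :=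
  is_lub (fun x => exists g h, x = Rabs (dphi mul phi g h)) c.

(* Main.v *)
Require Import Defs.
From Stdlib Require Import Reals ZArith Lra Lia Psatz Classical.
Open Scope R_scope.

Lemma asin_ge_PI3 x : sqrt 3 / 2 <= x -> PI / 3 <= asin x.
Proof.
  intros Hx. pose proof PI_RGT_0 as HP.
  assert (H3 : 0 < sqrt 3) by (apply sqrt_lt_R0; lra).
  destruct (Rle_or_lt 1 x) as [H1|H1].
  - unfold asin. destruct (Rle_dec x (-1)); [lra|].
    destruct (Rle_dec 1 x); lra.
  - destruct (Rle_or_lt (PI/3) (asin x)) as [|Hlt]; auto.
    exfalso. pose proof (asin_bound x).
    assert (sin (asin x) < sin (PI/3)) by (apply sin_increasing_1; lra).
    rewrite sin_asin in H0 by lra. rewrite sin_PI3 in H0. lra.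
Qed.

Lemma asin_nonneg x : 0 <= x -> 0 <= asin x.
Proof.
  intros Hx. pose proof PI_RGT_0 as HP.
  destruct (Rle_or_lt 1 x) as [H1|H1].
  - unfold asin. destruct (Rle_dec x (-1)); [lra|].
    destruct (Rle_dec 1 x); lra.
  - destruct (Rle_or_lt 0 (asin x)) as [|Hlt]; auto.
    exfalso. pose proof (asin_bound x).
    assert (sin (asin x) < sin 0) by (apply sin_increasing_1; lra).
    rewrite sin_asin in H0 by lra. rewrite sin_0 in H0. lra.
Qed.

Lemma INR_le_pow3 k : INR k <= 3 ^ k.
Proof.
  induction k. simpl; lra.
  rewrite S_INR. simpl. pose proof (pow_R1_Rle 3 k). lra.
Qed.

Theorem lemma2p3 (G : Type) (mul : G -> G -> G) (inv : G -> G) (e : G)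
  (phi : G -> R) (D c : R) :
  is_group mul inv e ->
  is_quasimorphism mul phi ->
  is_homogeneous mul inv e phi ->
  ~ is_hom_R mul phi ->
  is_D mul (fun g => expi (2 * PI * phi g)) D ->
  is_defect_norm mul phi c ->
  3 / PI * asin (D / 2) + c >= 1.
Proof.
  intros Hgrp _ Hhom Hnh HD Hc.
  destruct Hgrp as (_ & _ & Hre & _ & _).
  pose proof PI_RGT_0 as HP.
  assert (Hcb : forall g h, Rabs (dphi mul phi g h) <= c).
  { intros g h. destruct Hc as [Hu _]. apply Hu. eauto. }
  assert (Hc0 : 0 <= c) by (pose proof (Hcb e e); pose proof (Rabs_pos (dphi mul phi e e)); lra).
  assert (HD0 : 0 <= D).
  { destruct HD as [_ Hg]. apply Hg. intros x [nu [_ [Hu _]]].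
    apply Rle_trans with (Cdist (expi (2 * PI * phi e)) (nu e)).
    apply sqrt_pos. apply Hu. eauto. }
  assert (H3 : 0 < 3 / PI) by (apply Rdiv_lt_0_compat; lra).
  destruct (Rlt_or_le D (sqrt 3)) as [HDl|HDg].
  2:{ assert (PI/3 <= asin (D/2)) by (apply asin_ge_PI3; lra).
      assert (3/PI * (PI/3) <= 3/PI * asin (D/2)) by (apply Rmult_le_compat_l; lra).
      replace (3/PI*(PI/3)) with 1 in H0 by (field; lra). lra. }
  assert (Hasin : 0 <= 3/PI * asin (D/2)).
  { apply Rmult_le_pos. lra. apply asin_nonneg. lra. }
  destruct (classic (exists s, (exists nu, is_hom_U1 mul nu /\
              sup_dist (fun g => expi (2 * PI * phi g)) nu s) /\ s < sqrt 3))
    as [[s [[nu [[HU Hm] Hs]] Hs3]] | Hn].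
  2:{ exfalso. destruct HD as [_ Hg].
      assert (sqrt 3 <= D); [|lra].
      apply Hg. intros x Ex. destruct (Rle_or_lt (sqrt 3) x); auto.
      exfalso; apply Hn; eauto. }
  set (r := fun h => cos (2*PI*phi h) * fst (nu h) + sin (2*PI*phi h) * snd (nu h)).
  assert (Hid : forall h, (cos (2*PI*phi h) - fst (nu h))^2 + (sin (2*PI*phi h) - snd (nu h))^2
                        = 2 - 2 * r h).
  { intros h. unfold r. pose proof (HU h) as Hu. unfold in_U1 in Hu.
    pose proof (sin2_cos2 (2*PI*phi h)) as Hsc. unfold Rsqr in Hsc. nra. }
  assert (Hrgt : forall h, -1/2 < r h).
  { intros h. assert (Cdist (expi (2 * PI * phi h)) (nu h) < sqrt 3).
    { apply Rle_lt_trans with s; auto. destruct Hs as [Hu _]. apply Hu. eauto. }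
    unfold Cdist, expi in H. cbv [fst snd] in H. rewrite Hid in H.
    apply sqrt_lt_0_alt in H. lra. }
  assert (Hrle : forall h, r h <= 1).
  { intros h. pose proof (Hid h). pose proof (pow2_ge_0 (cos (2*PI*phi h) - fst (nu h))). pose proof (pow2_ge_0 (sin (2*PI*phi h) - snd (nu h))). lra. }
  assert (Hsq : forall h, r (mul h h) = 2 * r h ^ 2 - 1).
  { intros h. assert (Hp : phi (mul h h) = 2 * phi h).
    { pose proof (Hhom h 2%Z) as H. simpl in H. rewrite Hre in H. exact H. }
    unfold r. rewrite Hp. rewrite (Hm h h). unfold Cmul. simpl.
    replace (2 * PI * (2 * phi h)) with (2 * (2 * PI * phi h)) by ring.
    rewrite cos_2a, sin_2a.
    pose proof (HU h) as Hu. unfold in_U1 in Hu.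
    pose proof (sin2_cos2 (2*PI*phi h)) as Hsc. unfold Rsqr in Hsc.
    set (a := cos (2 * PI * phi h)) in *. set (b := sin (2 * PI * phi h)) in *.
    destruct (nu h) as [p q]. simpl in *.
    assert (Hu2 : p*p + q*q = 1) by lra.
    assert (HH : (b*b + a*a) * (p*p + q*q) = 1) by (rewrite Hsc, Hu2; ring).
    nra. }
  assert (Hhalf : forall h, 1/2 < r h).
  { intros h. pose proof (Hrgt (mul h h)). rewrite Hsq in H. pose proof (Hrgt h). nra. }
  assert (Hstep : forall h, 3 * (1 - r h) <= 1 - r (mul h h)).
  { intros h. rewrite Hsq. pose proof (Hhalf h). pose proof (Hrle h). nra. }
  assert (Hind : forall k h, 3 ^ k * (1 - r h) <= 1/2).
  { induction k; intros h.
    - simpl. pose proof (Hhalf h). lra.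
    - simpl. pose proof (IHk (mul h h)). pose proof (Hstep h).
      assert (0 < 3 ^ k) by (apply pow_lt; lra).
      assert (3^k * (3 * (1 - r h)) <= 3^k * (1 - r (mul h h))) by
        (apply Rmult_le_compat_l; lra). nra. }
  assert (Hr1 : forall h, r h = 1).
  { intros h. destruct (Rle_or_lt 1 (r h)) as [H|H]. pose proof (Hrle h); lra.
    exfalso. destruct (INR_unbounded (1 / (1 - r h))) as [k Hk].
    pose proof (INR_le_pow3 k). pose proof (Hind k h).
    assert (1 / (1 - r h) * (1 - r h) = 1) by (field; lra).
    assert (1 / (1 - r h) * (1 - r h) < 3^k * (1 - r h)) by
      (apply Rmult_lt_compat_r; lra). lra. }
  assert (Hmn : forall h, expi (2 * PI * phi h) = nu h).
  { intros h. pose proof (Hid h). rewrite Hr1 in H.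
    pose proof (pow2_ge_0 (cos (2*PI*phi h) - fst (nu h))).
    pose proof (pow2_ge_0 (sin (2*PI*phi h) - snd (nu h))).
    assert (Ha : (cos (2 * PI * phi h) - fst (nu h))^2 = 0) by lra.
    assert (Hb : (sin (2 * PI * phi h) - snd (nu h))^2 = 0) by lra.
    assert (Ha2 : cos (2 * PI * phi h) - fst (nu h) = 0) by (destruct (Req_dec (cos (2 * PI * phi h) - fst (nu h)) 0); auto; exfalso; apply (pow_nonzero _ 2 H2 Ha)). assert (Hb2 : sin (2 * PI * phi h) - snd (nu h) = 0) by (destruct (Req_dec (sin (2 * PI * phi h) - snd (nu h)) 0); auto; exfalso; apply (pow_nonzero _ 2 H2 Hb)). clear Ha Hb H H0 H1.
    unfold expi. destruct (nu h) as [p q]. simpl in *.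
    f_equal; lra. }
  assert (Hex : exists g h, phi (mul g h) <> phi g + phi h).
  { apply NNPP. intro Hne. apply Hnh. intros g h. apply NNPP. intro Hx.
    apply Hne. eauto. }
  destruct Hex as [g [h Hgh]].
  pose proof (Hmn (mul g h)) as E. rewrite (Hm g h) in E.
  rewrite <- (Hmn g), <- (Hmn h) in E. unfold expi, Cmul in E. simpl in E.
  injection E as E1 E2.
  rewrite <- cos_plus in E1. rewrite Rplus_comm, <- sin_plus in E2.
  set (d := dphi mul phi g h).
  assert (Hcos : cos (2 * (PI * d)) = 1).
  { replace (2 * (PI * d)) with (2 * PI * phi (mul g h) - (2 * PI * phi g + 2 * PI * phi h))
      by (unfold d, dphi; ring).
    rewrite cos_minus, E1, E2.
    pose proof (sin2_cos2 (2 * PI * phi g + 2 * PI * phi h)) as Hsc. unfold Rsqr in Hsc. lra. }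
  rewrite cos_2a_sin in Hcos.
  assert (sin (PI * d) = 0) by nra.
  destruct (sin_eq_0_0 _ H) as [k Hk].
  assert (Hdk : d = IZR k).
  { apply Rmult_eq_reg_l with PI; [|lra]. rewrite Hk; ring. }
  assert (k <> 0%Z).
  { intro Hk0. subst k. apply Hgh. unfold d, dphi in Hdk. lra. }
  assert (1 <= Rabs d).
  { rewrite Hdk, Rabs_Zabs. apply IZR_le. lia. }
  pose proof (Hcb g h). fold d in H2. lra.
Qed.
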